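(* Let $\mathrm{Aut}(\mathcal{NR})$ be the setwise stabiliser of the Nordstrom-Robinson code $\mathcal{NR}$ in $\mathrm{Aut}(\Gamma_{16})=T\rtimes L$, and let $\mu:\mathrm{Aut}(\mathcal{NR})\to S_{16}$ be the homomorphism $g\sigma\mapsto\sigma$ (for $g\in T$, $\sigma\in L$). Then the kernel of $\mu$ equals $T_{\mathcal{R}}=\{\beta\mapsto\beta+\alpha : \alpha\in\mathcal{R}\}$, the group of translations of $\mathbb{F}_2^{16}$ by elements of $\mathcal{R}$.
   Context: $\Gamma_{16}$ is the binary Hamming graph on $\mathbb{F}_2^{16}$; $\mathrm{Aut}(\Gamma_{16})=T\rtimes L$, where $T$ is the group of translations of $\mathbb{F}_2^{16}$ and $L\cong S_{16}$ is the group of coordinate permutations. Let $\mathcal{G}$ be the $[24,12,8]$ extended binary Golay code in $\mathbb{F}_2^{24}$, chosen so that $(1^8,0^{16})\in\mathcal{G}$. Let $J^*=\{1,\dots,8\}$, $J=\{9,\dots,24\}$, $\mathcal{D}^0=\{\alpha\in\mathcal{G}:\mathrm{supp}(\alpha)\cap J^*=\emptyset\}$ and, for $1\le i\le 7$, $\mathcal{D}^i=\{\alpha\in\mathcal{G}:\mathrm{supp}(\alpha)\cap J^*=\{i,8\}\}$. The Nordstrom-Robinson code $\mathcal{NR}\subseteq\mathbb{F}_2^{16}$ is the set of restrictions to the coordinates in $J$ of the vectors in $\bigcup_{i=0}^7\mathcal{D}^i$, and $\mathcal{R}\subseteq\mathcal{NR}$ is the set of restrictions to $J$ of the vectors in $\mathcal{D}^0$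 (this is the Reed–Muller code $R(1,4)$). *)

(* Defs.v *)
From mathcomp Require Import all_boot all_order all_algebra all_fingroup.
Set Implicit Arguments. Unset Strict Implicit. Unset Printing Implicit Defensive.
Import GRing.Theory.
Local Open Scope ring_scope.

(* Vectors of F_2^n are row vectors 'rV['F_2]_n.  Coordinate k (1-based in the
   paper) is the ordinal k-1.  J* = {1..8} = ordinals 0..7, J = {9..24} = 8..23. *)

Definition wt n (x : 'rV['F_2]_n) : nat := #|[set j | x 0 j != 0]|.

(* A [24,12,8] binary linear code (extended Golay code):
   an F_2-linear subspace (contains 0 and closed under +; over F_2 this is
   linearity) of size 2^12 (dimension 12) with minimum distance 8
   (every nonzero word has weight >= 8 and some nonzero word has weight 8). *)
Definition is_golay (C : {set 'rV['F_2]_24}) : Prop :=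
  [/\ (0 : 'rV['F_2]_24) \in C,
      {in C &, forall x y, x + y \in C},
      #|C| = (2 ^ 12)%N,
      {in C, forall x, x != 0 -> (8 <= wt x)%N} &
      exists2 x, x \in C & wt x = 8%N].

Definition e8 : 'rV['F_2]_24 := \row_(i < 24) (if (i < 8)%N then 1 else 0).

Definition inD0 (v : 'rV['F_2]_24) : bool :=
  [forall i : 'I_24, (i < 8)%N ==> (v 0 i == 0)].

(* D^i for i = k+1, k : 'I_7 : support meets J* exactly in {i, 8}
   (0-based ordinals k and 7). *)
Definition inDi (k : 'I_7) (v : 'rV['F_2]_24) : bool :=
  [forall i : 'I_24, (i < 8)%N ==>
     (v 0 i == (if (val i == val k) || (val i == 7%N) then 1 else 0))].

Definition colJ (j : 'I_16) : 'I_24 := rshift 8 j.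
Definition restrJ (v : 'rV['F_2]_24) : 'rV['F_2]_16 := \row_(j < 16) v 0 (colJ j).

Definition NR (C : {set 'rV['F_2]_24}) : {set 'rV['F_2]_16} :=
  [set restrJ v | v in [set v in C | inD0 v || [exists k : 'I_7, inDi k v]]].
Definition RM (C : {set 'rV['F_2]_24}) : {set 'rV['F_2]_16} :=
  [set restrJ v | v in [set v in C | inD0 v]].

(* Aut(Gamma_16) = T x| L : an element g sigma (g the translation by a,
   sigma in L = S_16) is encoded as the pair (a, sigma); it acts by
   x |-> (x with coordinates permuted by sigma) + a.  This encoding is
   bijective (each element of T L factors uniquely). *)
Definition autG16 := ('rV['F_2]_16 * 'S_16)%type.
Definition act (p : autG16) (x : 'rV['F_2]_16) : 'rV['F_2]_16 :=
  col_perm p.2 x + p.1.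

Definition inAutNR (C : {set 'rV['F_2]_24}) (p : autG16) : bool :=
  [set act p x | x in NR C] == NR C.

Definition mu (p : autG16) : 'S_16 := p.2.

Definition kerMu (C : {set 'rV['F_2]_24}) : {set autG16} :=
  [set p | inAutNR C p & mu p == 1%g].

Definition T_R (C : {set 'rV['F_2]_24}) : {set autG16} :=
  [set ((a, 1%g) : autG16) | a in RM C].

(* Main.v *)
Require Import Defs.
From mathcomp Require Import all_boot all_order all_algebra all_fingroup zify.
Set Implicit Arguments. Unset Strict Implicit. Unset Printing Implicit Defensive.
Import GRing.Theory.
Local Open Scope ring_scope.

Lemma F2_cases (a : 'F_2) : a = 0 \/ a = 1.
Proof. case: a => [[|[|n]]] H; [left|right|by []]; exact/val_inj. Qed.

Lemma F2_add_self (a : 'F_2) : a + a = 0.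
Proof. by case: (F2_cases a) => ->; apply/val_inj. Qed.

Lemma F2_add_neq0 (a b : 'F_2) : (a + b != 0) = (a != 0) (+) (b != 0).
Proof. by case: (F2_cases a) => ->; case: (F2_cases b) => ->. Qed.

Lemma F2_10 : (1 : 'F_2) != 0. Proof. by []. Qed.

Lemma addvv n (x : 'rV['F_2]_n) : x + x = 0.
Proof. by apply/rowP => j; rewrite !mxE F2_add_self. Qed.

Lemma add_eq n (x y z : 'rV['F_2]_n) : x + y = z -> x = z + y.
Proof. by move=> <-; rewrite -addrA addvv addr0. Qed.

Definition supp n (x : 'rV['F_2]_n) := [set j | x 0 j != 0].

Lemma wtE n (x : 'rV['F_2]_n) : wt x = #|supp x|.
Proof. by []. Qed.

Lemma in_supp_add n (x y : 'rV['F_2]_n) j :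
  (j \in supp (x + y)) = (j \in supp x) (+) (j \in supp y).
Proof. by rewrite !inE mxE F2_add_neq0. Qed.

Lemma wt_add_le n (x y : 'rV['F_2]_n) : (wt (x + y) <= wt x + wt y)%N.
Proof.
rewrite !wtE.
have sub : supp (x + y) \subset (supp x :|: supp y).
  apply/subsetP => j; rewrite in_supp_add in_setU.
  by case: (j \in supp x); case: (j \in supp y).
apply: leq_trans (subset_leq_card sub) _.
by rewrite cardsU leq_subr.
Qed.

Lemma wt0_eq n (x : 'rV['F_2]_n) : wt x = 0%N -> x = 0.
Proof.
rewrite wtE => /eqP; rewrite cards_eq0 => /eqP H; apply/rowP => j.
rewrite mxE; have : j \notin supp x by rewrite H inE.
by rewrite inE negbK => /eqP.
Qed.

Definition vec n (B : {set 'I_n}) : 'rV['F_2]_n := \row_j ((j \in B)%:R).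

Lemma supp_vec n (B : {set 'I_n}) : supp (vec B) = B.
Proof. by apply/setP => j; rewrite inE mxE; case: (j \in B). Qed.

Lemma vec_inj n : injective (@vec n).
Proof. by move=> A B H; rewrite -(supp_vec A) H supp_vec. Qed.

Definition Jst : {set 'I_24} := [set j : 'I_24 | (j < 8)%N].

Lemma card_Jst : #|Jst| = 8%N.
Proof.
have -> : Jst = [set lshift 16 k | k : 'I_8].
  apply/setP => j; rewrite inE; apply/idP/imsetP => [hj|[k _ ->]].
    by exists (Ordinal hj) => //; apply/val_inj.
  by rewrite /= ltn_ord.
by rewrite card_imset ?card_ord //; apply: lshift_inj.
Qed.

Definition win (x : 'rV['F_2]_24) := #|supp x :&: Jst|.
Definition wout (x : 'rV['F_2]_24) := #|supp x :\: Jst|.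

Lemma wt_split x : wt x = (win x + wout x)%N.
Proof. by rewrite wtE /win /wout cardsID. Qed.

Lemma e8E j : e8 0 j = if (j < 8)%N then 1 else 0.
Proof. by rewrite mxE. Qed.

Lemma win_e8 x : (win x + win (x + e8) = 8)%N.
Proof.
rewrite /win.
have -> : supp (x + e8) :&: Jst = Jst :\: supp x.
  apply/setP => j; rewrite !inE mxE e8E.
  by case: (j < 8)%N; rewrite ?andbF ?andbT // F2_add_neq0 F2_10 addbT.
by rewrite setIC cardsID card_Jst.
Qed.

Lemma wout_add_in (y f : 'rV['F_2]_24) :
  (forall j, j \notin Jst -> y 0 j = 0) -> wout (y + f) = wout f.
Proof.
move=> Hy; rewrite /wout; apply: eq_card => j.
rewrite !inE mxE; case hj: (j < 8)%N => //=.
by rewrite Hy ?inE ?hj // add0r.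
Qed.

Lemma wout_e8 x : wout (x + e8) = wout x.
Proof.
by rewrite addrC wout_add_in // => j; rewrite inE e8E => /negbTE ->.
Qed.

Lemma restrJ_add (u v : 'rV['F_2]_24) : restrJ (u + v) = restrJ u + restrJ v.
Proof. by apply/rowP => j; rewrite !mxE. Qed.

Lemma inD0P (v : 'rV['F_2]_24) : reflect (forall j : 'I_24, (j < 8)%N -> v 0 j = 0) (inD0 v).
Proof.
apply: (iffP forallP) => H j; first by move=> hj; apply/eqP; move/implyP: (H j); apply.
by apply/implyP => hj; apply/eqP; apply: H.
Qed.

Lemma inDiP (k : 'I_7) (v : 'rV['F_2]_24) : reflect (forall j : 'I_24, (j < 8)%N ->
   v 0 j = (if (val j == val k) || (val j == 7%N) then 1 else 0)) (inDi k v).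
Proof.
apply: (iffP forallP) => H j; first by move=> hj; apply/eqP; move/implyP: (H j); apply.
by apply/implyP => hj; apply/eqP; apply: H.
Qed.


Lemma card_small (T : finType) n :
  #|[set A : {set T} | (#|A| < n)%N]| = (\sum_(k < n) 'C(#|T|, k))%N.
Proof.
elim: n => [|n IH].
  rewrite big_ord0; apply/eqP; rewrite cards_eq0; apply/eqP/setP => A.
  by rewrite !inE.
rewrite big_ord_recr /= -IH -card_draws.
have -> : [set A : {set T} | (#|A| < n.+1)%N] =
   [set A : {set T} | (#|A| < n)%N] :|: [set A : {set T} | #|A| == n].
  by apply/setP => A; rewrite !inE ltnS leq_eqVlt orbC.
rewrite cardsU.
have -> : [set A : {set T} | (#|A| < n)%N] :&: [set A : {set T} | #|A| == n] = set0.
  apply/setP => A; rewrite !inE; case: (ltngtP #|A| n) => //.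
by rewrite cards0 subn0.
Qed.

Lemma swap4 n (a b c d : 'rV['F_2]_n) : a + b = c + d -> a + c = b + d.
Proof.
move=> H; apply/rowP => j; move/rowP: H => /(_ j); rewrite !mxE.
by case: (F2_cases (a 0 j)) => ->; case: (F2_cases (b 0 j)) => ->;
   case: (F2_cases (c 0 j)) => ->; case: (F2_cases (d 0 j)) => ->;
   move/(congr1 val) => //= _; apply/val_inj.
Qed.

Definition tt8 : 'I_24 := colJ ord0.
Definition et : 'rV['F_2]_24 := vec [set tt8].

Lemma et_t : et 0 tt8 = 1.
Proof. by rewrite mxE inE eqxx. Qed.

Lemma wt_et : wt et = 1%N.
Proof. by rewrite wtE supp_vec cards1. Qed.

Lemma tt8_notin : tt8 \notin Jst.
Proof. by rewrite inE. Qed.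

Definition Eset : {set 'rV['F_2]_24} :=
  [set vec (lift tt8 @: A) | A : {set 'I_23} in [set A : {set 'I_23} | (#|A| < 4)%N]].

Lemma card_Eset : #|Eset| = (2 ^ 11)%N.
Proof.
rewrite card_in_imset; last first.
  by move=> A B _ _ /vec_inj /imset_inj; apply; exact: lift_inj.
by rewrite card_small card_ord !big_ord_recr big_ord0 /=.
Qed.

Lemma Eset_prop e : e \in Eset -> e 0 tt8 = 0 /\ (wt e <= 3)%N.
Proof.
case/imsetP => A; rewrite inE => hA ->; split.
  rewrite mxE; case: imsetP => // [[k _ H]].
  by have := neq_lift tt8 k; rewrite -H eqxx.
by rewrite wtE supp_vec card_imset //; exact: lift_inj.
Qed.


Lemma octad (C : {set 'rV['F_2]_24}) : is_golay C -> e8 \in C ->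
  forall T : {set 'I_24}, T \subset Jst -> #|T| = 4%N ->
  exists2 c, c \in C & forall j, j \in Jst -> c 0 j = (j \in T)%:R.
Proof.
case=> C0 Cadd Ccard Cmin _ He8 T TJ T4.
have Cne (c c' : 'rV['F_2]_24) : c \in C -> c' \in C -> (wt (c + c') < 8)%N -> c = c'.
  move=> hc hc' hw; case: (eqVneq (c + c') 0) => [/add_eq|].
    by rewrite add0r.
  by move/(Cmin _ (Cadd _ _ hc hc')); rewrite leqNgt hw.
set S := [set p.1 + p.2 | p in setX C Eset].
have cardS : #|S| = (2^12 * 2^11)%N.
  rewrite card_in_imset ?cardsX ?Ccard ?card_Eset //.
  move=> [c e] [c' e'] /setXP [hc he] /setXP [hc' he'] /= H.
  have Hcc : c = c'.
    apply: Cne => //; rewrite (swap4 H).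
    case: (Eset_prop he) => _ h1; case: (Eset_prop he') => _ h2.
    apply: leq_ltn_trans (wt_add_le _ _) _; lia.
  by move: H; rewrite Hcc => /addrI ->.
set S' := [set s + et | s in S].
have cardS' : #|S'| = #|S| by rewrite card_imset //; exact: addIr.
have dis : S :&: S' = set0.
  apply/setP => z; rewrite in_setI in_set0; apply/negbTE/negP.
  move=> /andP[/imsetP[[c e] /setXP[hc he] ->] /imsetP[s /imsetP[[c' e'] /setXP[hc' he'] ->] H]].
  rewrite /= -addrA in H.
  case: (Eset_prop he) => he0 h1; case: (Eset_prop he') => he0' h2.
  have Hcc : c = c'.
    apply: Cne => //; rewrite (swap4 H).
    apply: leq_ltn_trans (wt_add_le _ _) _.
    have h3 := leq_trans (wt_add_le e' et) (leq_add h2 (eq_leq wt_et)).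
    exact: leq_ltn_trans (leq_add h1 h3) _.
  move: H; rewrite Hcc => /addrI /rowP /(_ tt8).
  rewrite !mxE he0 he0' ?et_t add0r ?inE ?eqxx. by move/(congr1 val).
have cover : S :|: S' = setT.
  apply/eqP; rewrite eqEcard subsetT cardsT card_mx card_Fp //.
  by rewrite cardsU dis cards0 subn0 cardS' cardS andTb -expnD addnn -mul2n -expnS mul1n leqnn.
set y := vec T.
have HyS : y \in S :|: S' by rewrite cover in_setT.
have [c [f [hc Hcf Hf4 Hf3]]] : exists c f, [/\ c \in C, c = y + f, (wt f <= 4)%N &
     (wt f <= 3)%N \/ f 0 tt8 = 1].
  move: HyS; rewrite in_setU => /orP [/imsetP[[c e] /setXP[hc he] Hy] | /imsetP[s /imsetP[[c e] /setXP[hc he] ->] Hy]].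
    exists c, e; case: (Eset_prop he) => _ he3; split => //; last by left.
      by apply: add_eq; rewrite Hy.
    exact: leq_trans he3 _.
  exists c, (e + et); case: (Eset_prop he) => he0 he3; split => //.
  - by apply: add_eq; rewrite addrA Hy.
  - by apply: leq_trans (wt_add_le _ _) _; rewrite wt_et; lia.
  - by right; rewrite mxE he0 et_t add0r.
exists c => // j hj.
have yout : forall j, j \notin Jst -> y 0 j = 0.
  move=> i hi; rewrite mxE; case hiT: (i \in T) => //.
  by move: hi; rewrite (subsetP TJ _ hiT).
have yt : y 0 tt8 = 0 by apply: yout; exact: tt8_notin.
have wty : wt y = 4%N by rewrite wtE supp_vec.
have winy : win y = 4%N by rewrite /win supp_vec (setIidPl TJ).
have wouty : wout y = 0%N.
  by rewrite /wout supp_vec; apply/eqP; rewrite cards_eq0 setD_eq0.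
case: (eqVneq c 0) => [c0 | cn0].
  have fy : f = y.
    by move: Hcf; rewrite c0 => /esym; rewrite (addrC y f) => /add_eq; rewrite add0r.
  case: Hf3; first by rewrite fy wty.
  by move=> H; have := yt; rewrite -fy H => /(congr1 val).
case: (eqVneq c e8) => [ce8 | cne8].
  have fy : f = y + e8.
    by move: Hcf; rewrite ce8 => /esym; rewrite (addrC y f) (addrC y e8) => /add_eq.
  have ft : f 0 tt8 = 0 by rewrite fy mxE yt e8E add0r.
  have wtf : wt f = 4%N.
    by rewrite fy wt_split wout_e8 wouty; have := win_e8 y; rewrite winy; lia.
  case: Hf3; first by rewrite wtf.
  by move=> H; have := ft; rewrite H => /(congr1 val).
have w1 := Cmin _ hc cn0.
have ce8n : c + e8 != 0.
  by apply/eqP => /add_eq; rewrite add0r; apply/eqP.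
have w2 := Cmin _ (Cadd _ _ hc He8) ce8n.
move: w1 w2; rewrite !wt_split wout_e8 => w1 w2.
have := win_e8 c.
have Wo : wout c = wout f by rewrite Hcf wout_add_in.
have := wt_split f; rewrite -Wo => Wf Wsum.
have winf : win f = 0%N.
  have Wsum2 : (win c + win (c + e8) = 8)%N := Wsum.
  rewrite Wf in Hf4; move: w1 w2 Wsum2 Hf4.
  generalize (win c) (win (c + e8)) (wout c) (win f) => a b d g; lia.
have fj : f 0 j = 0.
  move/eqP: winf; rewrite cards_eq0 => /eqP Hs.
  have : j \notin supp f :&: Jst by rewrite Hs in_set0.
  by rewrite in_setI hj andbT inE negbK => /eqP.
by rewrite Hcf mxE fj addr0 mxE.
Qed.


Notation o n := (@Ordinal 24 n isT).

Lemma pair_witness (C : {set 'rV['F_2]_24}) : is_golay C -> e8 \in C ->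
  forall T1 T2 : {set 'I_24}, T1 \subset Jst -> #|T1| = 4%N ->
  T2 \subset Jst -> #|T2| = 4%N ->
  exists2 w, w \in C & forall j, j \in Jst -> w 0 j = (j \in T1)%:R + (j \in T2)%:R.
Proof.
move=> G He8 T1 T2 s1 c1 s2 c2.
have [w1 h1 H1] := octad G He8 s1 c1.
have [w2 h2 H2] := octad G He8 s2 c2.
case: G => _ Cadd _ _ _.
exists (w1 + w2); first exact: Cadd.
by move=> j hj; rewrite mxE H1 // H2.
Qed.

Lemma sub4 (a b c d : 'I_24) : (a < 8)%N -> (b < 8)%N -> (c < 8)%N -> (d < 8)%N ->
  [set a; b; c; d] \subset Jst.
Proof.
move=> ha hb hc hd; apply/subsetP => j; rewrite !inE.
by move=> /orP[/orP[/orP[/eqP->|/eqP->]|/eqP->]|/eqP->].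
Qed.

Lemma card4 (a b c d : 'I_24) : uniq [:: a; b; c; d] -> #|[set a; b; c; d]| = 4%N.
Proof.
move=> u.
have -> : [set a; b; c; d] = [set x in [:: a; b; c; d]].
  by apply/setP => x; rewrite !inE !orbA.
by rewrite cardsE; apply/card_uniqP.
Qed.

Lemma Di_witness (C : {set 'rV['F_2]_24}) : is_golay C -> e8 \in C ->
  forall i : 'I_7, (i < 2)%N -> exists2 w, w \in C & inDi i w.
Proof.
move=> G He8 [[|[|n]] Hi] // _.
- have c1 : #|[set o 0; o 4; o 5; o 6]| = 4%N by apply: card4.
  have c2 : #|[set o 7; o 4; o 5; o 6]| = 4%N by apply: card4.
  have s1 : [set o 0; o 4; o 5; o 6] \subset Jst by apply: sub4.
  have s2 : [set o 7; o 4; o 5; o 6] \subset Jst by apply: sub4.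
  have [w hw Hw] := pair_witness G He8 s1 c1 s2 c2.
  exists w => //; apply/inDiP => j hj; rewrite Hw ?inE //.
  by move: j hj; case=> [[|[|[|[|[|[|[|[|m]]]]]]]] Hj] //= _; apply/val_inj.
- have c1 : #|[set o 1; o 4; o 5; o 6]| = 4%N by apply: card4.
  have c2 : #|[set o 7; o 4; o 5; o 6]| = 4%N by apply: card4.
  have s1 : [set o 1; o 4; o 5; o 6] \subset Jst by apply: sub4.
  have s2 : [set o 7; o 4; o 5; o 6] \subset Jst by apply: sub4.
  have [w hw Hw] := pair_witness G He8 s1 c1 s2 c2.
  exists w => //; apply/inDiP => j hj; rewrite Hw ?inE //.
  by move: j hj; case=> [[|[|[|[|[|[|[|[|m]]]]]]]] Hj] //= _; apply/val_inj.
Qed.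


Lemma small_contra (C : {set 'rV['F_2]_24}) (z : 'rV['F_2]_24) :
  is_golay C -> z \in C -> z != 0 ->
  (forall j : 'I_24, ~~ (j < 8)%N -> z 0 j = 0) ->
  forall j0 : 'I_24, (j0 < 8)%N -> z 0 j0 = 0 -> False.
Proof.
case=> _ _ _ Cmin _ zC zn0 zout j0 hj0 zj0.
have w8 := Cmin _ zC zn0.
have sub : supp z \subset Jst :\ j0.
  apply/subsetP => j; rewrite inE => hj; rewrite !inE.
  case: (eqVneq j j0) => [ej | //=]; first by move: hj; rewrite ej zj0 eqxx.
  case hj8 : (j < 8)%N => //; by move: hj; rewrite zout ?hj8 ?eqxx.
have := subset_leq_card sub.
have := cardsD1 j0 Jst; rewrite card_Jst inE hj0 /= => -[] H7.
by rewrite add0n in H7; rewrite -wtE -H7 => h; move: (leq_trans w8 h); rewrite ltnn.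
Qed.

Lemma F2_sum3 (a b c : 'F_2) : a = b + c -> a + (b + c) = 0.
Proof. by move=> ->; rewrite F2_add_self. Qed.

Lemma key (C : {set 'rV['F_2]_24}) : is_golay C -> e8 \in C ->
  forall a, ([set x + a | x in NR C] == NR C) = (a \in RM C).
Proof.
move=> G He8 a; case: (G) => C0 Cadd _ _ _.
apply/idP/idP.
- move/eqP => H.
  have NR0 : (0 : 'rV['F_2]_16) \in NR C.
    apply/imsetP; exists 0; last by apply/rowP => j; rewrite !mxE.
    rewrite inE C0; apply/orP; left; apply/inD0P => j _; rewrite mxE.
    by [].
  have aNR : a \in NR C by rewrite -H; apply/imsetP; exists 0 => //; rewrite add0r.
  case/imsetP: aNR => v; rewrite inE => /andP [vC /orP [v0 | /existsP [k vk]]] Ha.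
    by apply/imsetP; exists v => //; rewrite inE vC v0.
  exfalso.
  have [i [ik [w wC wi]]] : exists i : 'I_7, i != k /\ exists2 w, w \in C & inDi i w.
    case: (eqVneq (val k) 0%N) => hk.
      exists (@Ordinal 7 1 isT); split; last by apply: Di_witness.
      by apply/eqP => h; move: hk; rewrite -h.
    exists (@Ordinal 7 0 isT); split; last by apply: Di_witness.
    by apply/eqP => h; move: hk; rewrite -h.
  have xNR : restrJ w \in NR C.
    apply/imsetP; exists w => //; rewrite inE wC; apply/orP; right.
    by apply/existsP; exists i.
  have : restrJ w + a \in NR C by rewrite -H; apply: imset_f.
  case/imsetP => u; rewrite inE => /andP [uC upat] Hu.
  set z := u + (w + v).
  have zC : z \in C := Cadd _ _ uC (Cadd _ _ wC vC).
  have zout : forall j : 'I_24, ~~ (j < 8)%N -> z 0 j = 0.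
    move=> j hj.
    have hj8 : (8 <= j)%N by rewrite leqNgt.
    have hj' : (j - 8 < 16)%N by rewrite ltn_subLR.
    have Ej : colJ (Ordinal hj') = j by apply/val_inj => /=; rewrite subnKC.
    move/rowP: Hu => /(_ (Ordinal hj')); rewrite Ha !mxE Ej => Hu.
    by apply: F2_sum3; rewrite Hu.
  have vi : forall j : 'I_7, v 0 (lshift 17 j : 'I_24) = (if val j == val k then 1 else 0).
    move=> j; have hj7 : (val j == 7%N) = false by apply/negbTE; rewrite neq_ltn ltn_ord.
    rewrite (inDiP _ _ vk) /= ?hj7 ?orbF //.
    exact: ltn_trans (ltn_ord j) _.
  have wj : forall j : 'I_7, w 0 (lshift 17 j : 'I_24) = (if val j == val i then 1 else 0).
    move=> j; have hj7 : (val j == 7%N) = false by apply/negbTE; rewrite neq_ltn ltn_ord.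
    rewrite (inDiP _ _ wi) /= ?hj7 ?orbF //.
    exact: ltn_trans (ltn_ord j) _.
  have w7 : w 0 (@Ordinal 24 7 isT) = 1 by rewrite (inDiP _ _ wi) //= eqxx orbT.
  have v7 : v 0 (@Ordinal 24 7 isT) = 1 by rewrite (inDiP _ _ vk) //= eqxx orbT.
  have nik : (val i == val k) = false := negbTE ik.
  case/orP: upat => [u0 | /existsP [m um]].
    apply: (small_contra G zC _ zout (j0 := @Ordinal 24 7 isT)) => //.
      apply/eqP => /rowP /(_ (lshift 17 i : 'I_24)).
      rewrite !mxE (inD0P _ u0) ?wj ?vi ?eqxx ?nik; last exact: ltn_trans (ltn_ord i) _.
      by move/(congr1 val).
    by rewrite !mxE (inD0P _ u0) // w7 v7; apply/val_inj.
  have u7 : u 0 (@Ordinal 24 7 isT) = 1 by rewrite (inDiP _ _ um) //= eqxx orbT.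
  have uj : forall j : 'I_7, u 0 (lshift 17 j : 'I_24) = (if val j == val m then 1 else 0).
    move=> j; have hj7 : (val j == 7%N) = false by apply/negbTE; rewrite neq_ltn ltn_ord.
    rewrite (inDiP _ _ um) /= ?hj7 ?orbF //.
    exact: ltn_trans (ltn_ord j) _.
  have cA : (#|[set i; k; m]| <= 3)%N.
    have -> : [set i; k; m] = [set x in [:: i; k; m]].
      by apply/setP => x; rewrite !inE !orbA.
    by rewrite cardsE; apply: card_size.
  have : ~: [set i; k; m] != set0.
    rewrite -card_gt0; have := cardsC [set i; k; m]; rewrite card_ord => Hc.
    by rewrite -(ltn_add2l #|[set i; k; m]|) addn0 Hc; exact: leq_ltn_trans cA _.
  case/set0Pn => j0; rewrite !inE !negb_or => /andP [/andP [h1 h2] h3].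
  apply: (small_contra G zC _ zout (j0 := lshift 17 j0 : 'I_24)).
  - apply/eqP => /rowP /(_ (@Ordinal 24 7 isT)).
    by rewrite !mxE u7 w7 v7 => /(congr1 val).
  - exact: ltn_trans (ltn_ord j0) _.
  - by rewrite !mxE uj wj vi (negbTE h1 : (val j0 == val i) = false) (negbTE h2 : (val j0 == val k) = false) (negbTE h3 : (val j0 == val m) = false) !addr0.
- case/imsetP => v; rewrite inE => /andP [vC v0] ->.
  rewrite eqEcard.
  have -> : #|[set x + restrJ v | x in NR C]| = #|NR C| by apply: card_imset; exact: addIr.
  rewrite leqnn andbT.
  apply/subsetP => y /imsetP [x /imsetP [w]]; rewrite inE => /andP [wC wpat] -> ->.
  apply/imsetP; exists (w + v); last by rewrite restrJ_add.
  rewrite inE Cadd //=.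
  case/orP: wpat => [w0 | /existsP [m wm]]; apply/orP.
    left; apply/inD0P => j hj; rewrite mxE (inD0P _ w0) // (inD0P _ v0) //.
    by rewrite addr0.
  right; apply/existsP; exists m; apply/inDiP => j hj.
  by rewrite mxE (inDiP _ _ wm) // (inD0P _ v0) // addr0.
Qed.

Close Scope ring_scope.

Theorem lemma3p1 (C : {set 'rV['F_2]_24}) :
  is_golay C -> e8 \in C -> kerMu C = T_R C.
Proof.
move=> G He8; apply/setP => -[a s]; rewrite /kerMu /T_R inE /inAutNR /mu /=.
case: (eqVneq s 1%g) => [-> | ns].
  rewrite andbT.
  have -> : [set Defs.act (a, 1%g) x | x in NR C] = [set (x + a)%R | x in NR C].
    by apply: eq_imset => x; rewrite /Defs.act col_perm1.
  rewrite key //. apply/idP/idP => [h | /imsetP [a' h E]].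
    by apply/imsetP; exists a.
  by case: E => ->.
rewrite andbF; apply/esym/negbTE/imsetP => -[a' _ [_ E]].
by rewrite E eqxx in ns.
Qed.
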